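(* Let $(X,\le)$ be a poset and $E$ an equivalence relation on $X$ with ${\le}\subseteq E$. Then: (i) ${\le}\in\mathsf{Up}(\mathbf E)$; (ii) ${\le}\circ R=R\circ{\le}=R$ for all $R\in\mathsf{Up}(\mathbf E)$; (iii) ${\le}^\smile\circ S=S\circ{\le}^\smile=S$ for all $S\in\mathsf{Down}(\mathbf E)$.
   Context: For binary relations: converse $R^\smile=\{(x,y)\mid(y,x)\in R\}$; composition $R\circ S=\{(x,y)\mid\exists z\,((x,z)\in R,(z,y)\in S)\}$. For a poset $(X,\le)$ and an equivalence relation $E\supseteq{\le}$ on $X$, $E$ is partially ordered by $(u,v)\preceq(x,y)$ iff $x\le u$ and $v\le y$; $\mathbf E=(E,\preceq)$, and $\mathsf{Up}(\mathbf E)$, $\mathsf{Down}(\mathbf E)$ are its sets of up-sets and down-sets. The relation $\le$ is regarded as the set $\{(x,y)\mid x\le y\}\subseteq X^2$. *)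

(* Defs.v *)
From Stdlib Require Export RelationClasses.

Definition brel (X : Type) := X -> X -> Prop.

Definition converse {X : Type} (R : brel X) : brel X := fun x y => R y x.

Definition comp {X : Type} (R S : brel X) : brel X :=
  fun x y => exists z, R x z /\ S z y.

Definition subrel {X : Type} (R S : brel X) : Prop := forall x y, R x y -> S x y.
Definition releq {X : Type} (R S : brel X) : Prop := forall x y, R x y <-> S x y.

(* The order on E:  (u,v) ⪯ (x,y)  iff  x <= u and v <= y *)
Definition E_ord {X : Type} (le : brel X) (p q : X * X) : Prop :=
  le (fst q) (fst p) /\ le (snd p) (snd q).

Definition Up {X : Type} (le E : brel X) (R : brel X) : Prop :=
  subrel R E /\
  forall u v x y, R u v -> E x y -> E_ord le (u, v) (x, y) -> R x y.

Definition Down {X : Type} (le E : brel X) (S : brel X) : Prop :=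
  subrel S E /\
  forall u v x y, S u v -> E x y -> E_ord le (x, y) (u, v) -> S x y.

(* Main.v *)
Require Import Defs.

Theorem lemma3p6 (X : Type) (le E : brel X)
  (le_pre : PreOrder le) (le_anti : Antisymmetric X eq le)
  (E_equiv : Equivalence E) (le_sub_E : subrel le E) :
  Up le E le /\
  (forall R, Up le E R -> releq (comp le R) R /\ releq (comp R le) R) /\
  (forall S, Down le E S ->
     releq (comp (converse le) S) S /\ releq (comp S (converse le)) S).
Proof.
  assert (Hr : forall x, le x x) by (intro; reflexivity).
  assert (Ht : forall x y z, le x y -> le y z -> le x z) by (intros; etransitivity; eauto).
  assert (Et : forall x y z, E x y -> E y z -> E x z) by (intros; etransitivity; eauto).
  unfold Up, Down, releq, comp, converse, E_ord, subrel in *; simpl in *.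
  split; [|split].
  - split; [exact le_sub_E|]. intros u v x y H1 _ [H2 H3]. eauto.
  - intros R [HE HU]. split; intros x y; split.
    + intros [z [H1 H2]]. apply (HU z y); eauto.
    + intros H; exists x; eauto.
    + intros [z [H1 H2]]. apply (HU x z); eauto.
    + intros H; exists y; eauto.
  - intros S [HE HD]. split; intros x y; split.
    + intros [z [H1 H2]]. apply (HD z y); eauto. apply Et with z; [symmetry|]; eauto.
    + intros H; exists x; eauto.
    + intros [z [H1 H2]]. apply (HD x z); eauto. apply Et with z; [|symmetry]; eauto.
    + intros H; exists y; eauto.
Qed.
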